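(* Let $d=1$. There is a constant $c_1$ depending only on the dimension such that for all $N\ge1$, $$E_Q\left((Z(N)-1)^2\right)\le\sum_{n=1}^N\left(c_1c^2_{N,1}N^{1/2}\right)^n.$$
   Context: $P^N_0$ is the uniform probability measure on nearest-neighbour walks $\omega:\{0,\dots,N\}\to\mathbb{Z}$ with $\omega(0)=0$, $|\omega(n)-\omega(n-1)|=1$. The environment $h=\{h(n,x):n\in\mathbb{N},x\in\mathbb{Z}\}$ is i.i.d. with $h(n,x)=\pm1$ each with probability $1/2$ on $(H,\mathcal{G},Q)$, independent of the walk; $E_Q$ is expectation under $Q$. $(c_{N,1})$ is a sequence of positive numbers with $\lim_{N\to\infty}c_{N,1}^2N^{1/2}=0$. $Z(N)=\int\prod_{n=1}^N[1+c_{N,1}h(n,\omega(n))]\,dP^N_0(\omega)$. *)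

(* Defs.v *)
From HB Require Import structures.
From mathcomp Require Import all_boot all_order all_algebra.
From mathcomp Require Import all_classical all_reals all_analysis.
Set Implicit Arguments. Unset Strict Implicit. Unset Printing Implicit Defensive.
Import Order.TTheory GRing.Theory Num.Theory.
Local Open Scope ring_scope.

Definition avg (R : realType) (T : finType) (f : T -> R) : R :=
  (#|T|%:R)^-1 * \sum_(t : T) f t.

(* A nearest-neighbour walk of length N started at 0 is encoded by its N steps
   (true = +1, false = -1); the uniform measure P^N_0 is the uniform measure
   on these step sequences. *)
Definition steps (N : nat) := {ffun 'I_N -> bool}.

Definition walk_pos (N : nat) (s : steps N) (n : nat) : int :=
  \sum_(i < N | (i < n)%N) (if s i then 1 else -1).

(* The environment restricted to the box {1..N} x {-N..N}, which contains all
   sites (n, omega(n)) visited by walks of length N; time n (1<=n<=N) is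
   encoded by the ordinal n-1 and position x by x+N. true = +1, false = -1.
   Under Q these (N*(2N+1)) variables are i.i.d. uniform on {+1,-1}, i.e. the
   joint law is uniform on this finite type. *)
Definition env (N : nat) := {ffun 'I_N * 'I_(N.*2).+1 -> bool}.

Definition sgnb (R : realType) (b : bool) : R := if b then 1 else -1.

Definition hval (R : realType) (N : nat) (h : env N) (i : 'I_N) (x : int) : R :=
  sgnb R (h (i, inord (absz (x + (N%:Z))))).

Definition Zpart (R : realType) (N : nat) (c : R) (h : env N) : R :=
  avg (fun s : steps N =>
         \prod_(i < N) (1 + c * hval R h i (walk_pos s i.+1))).

(* Main.v *)
Require Import Defs.
From HB Require Import structures.
From mathcomp Require Import all_boot all_order all_algebra.
From mathcomp Require Import all_classical all_reals all_analysis.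
From mathcomp Require Import ring lra.
Import Order.TTheory GRing.Theory Num.Theory.
Import numFieldNormedType.Exports.
Local Open Scope classical_set_scope.
Local Open Scope ring_scope.
Set Implicit Arguments. Unset Strict Implicit.

Definition fcons m (b : bool) (y : steps m) : steps m.+1 :=
  [ffun i : 'I_m.+1 => if unlift ord0 i is Some j then y j else b].

Lemma fcons0 m b (y : steps m) : fcons b y ord0 = b.
Proof. by rewrite ffunE unlift_none. Qed.

Lemma fconsS m b (y : steps m) j : fcons b y (lift ord0 j) = y j.
Proof. by rewrite ffunE liftK. Qed.

Lemma sum_split (R : realType) m (F : steps m.+1 -> R) :
  \sum_(s : steps m.+1) F s = \sum_(b : bool) \sum_(y : steps m) F (fcons b y).
Proof.
rewrite pair_big /=.
pose g (p : bool * steps m) := fcons p.1 p.2.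
pose gi (s : steps m.+1) := (s ord0, [ffun j => s (lift ord0 j)] : steps m).
rewrite (reindex g) //=.
exists gi.
- move=> [b y] _; rewrite /gi /g /= fcons0; congr pair; apply/ffunP => j.
  by rewrite ffunE fconsS.
- move=> s _; apply/ffunP => i; rewrite /g /gi /= ffunE.
  by case: (unliftP ord0 i) => [j ->|->]; rewrite ?ffunE.
Qed.

Lemma walk_pos0 m (s : steps m) : walk_pos s 0 = 0.
Proof. by rewrite /walk_pos big_pred0. Qed.

Lemma walk_posS m b (y : steps m) n :
  walk_pos (fcons b y) n.+1 = (if b then 1 else -1) + walk_pos y n.
Proof.
rewrite /walk_pos big_mkcond big_ord_recl /= fcons0; congr (_ + _).
rewrite [RHS]big_mkcond; apply: eq_bigr => j _.
rewrite fconsS /=. by [].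
Qed.

Definition ee (b b' : bool) : int := (if b then 1 else -1) - (if b' then 1 else -1).
Definition Dw m (s s' : steps m) n : int := walk_pos s n - walk_pos s' n.

Section Ev.
Variable R : realType.

Definition Ev m (G : steps m -> steps m -> R) : R :=
  ((4:R)^+m)^-1 * \sum_(s : steps m) \sum_(s' : steps m) G s s'.

Lemma card_steps m : #|steps m| = (2 ^ m)%N.
Proof. by rewrite card_ffun card_bool card_ord. Qed.

Lemma Ev_const m (k : R) : Ev (fun _ _ : steps m => k) = k.
Proof.
rewrite /Ev; under eq_bigr do rewrite sumr_const.
rewrite sumr_const card_steps -mulrnA -[k *+ _]mulr_natr.
have -> : ((2 ^ m * 2 ^ m)%N%:R : R) = 4 ^+ m by rewrite -expnMn natrX.
by rewrite mulrCA mulVf ?mulr1 // expf_neq0.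
Qed.

Lemma EvD m (F G : steps m -> steps m -> R) :
  Ev (fun s s' => F s s' + G s s') = Ev F + Ev G.
Proof.
rewrite /Ev -mulrDr; congr (_ * _); rewrite -big_split /=.
by apply: eq_bigr => s _; rewrite big_split.
Qed.

Lemma EvZ m k (F : steps m -> steps m -> R) :
  Ev (fun s s' => k * F s s') = k * Ev F.
Proof.
rewrite /Ev mulrCA; congr (_ * _); rewrite mulr_sumr.
by apply: eq_bigr => s _; rewrite mulr_sumr.
Qed.

Lemma Ev_le m (F G : steps m -> steps m -> R) :
  (forall s s', F s s' <= G s s') -> Ev F <= Ev G.
Proof.
move=> H; rewrite /Ev ler_wpM2l // ?invr_ge0 ?exprn_ge0 //.
by apply: ler_sum => s _; apply: ler_sum => s' _.
Qed.

Lemma Ev_split m (G : steps m.+1 -> steps m.+1 -> R) :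
  Ev G = 4^-1 * \sum_(b : bool) \sum_(b' : bool)
     Ev (fun y y' => G (fcons b y) (fcons b' y')).
Proof.
rewrite /Ev exprS invfM -mulrA; congr (_ * _).
rewrite sum_split.
under eq_bigr => b _ do under eq_bigr => y _ do rewrite sum_split.
rewrite mulr_sumr; apply: eq_bigr => b _; rewrite exchange_big mulr_sumr.
by apply: eq_bigr => b' _.
Qed.

End Ev.

Lemma Dw0 m (s s' : steps m) : Dw s s' 0 = 0.
Proof. by rewrite /Dw !walk_pos0 subrr. Qed.

Lemma DwS m b b' (y y' : steps m) n :
  Dw (fcons b y) (fcons b' y') n.+1 = ee b b' + Dw y y' n.
Proof. by rewrite /Dw !walk_posS /ee; rewrite addrACA opprD. Qed.

Lemma bump00 (i : nat) : bump 0 i = i.+1. Proof. by []. Qed.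

Section Rec.
Variable R : realType.

Lemma eq_Ev m (F G : steps m -> steps m -> R) :
  (forall s s', F s s' = G s s') -> Ev F = Ev G.
Proof. by move=> H; rewrite /Ev; congr (_ * _); apply: eq_bigr => s _; apply: eq_bigr. Qed.

Definition dl (x : int) : R := (x == 0)%:R.

Definition Kop (f : int -> R) (d : int) : R :=
  4^-1 * \sum_(b : bool) \sum_(b' : bool) f (d + ee b b').

Lemma Kop_eq f d : Kop f d = 4^-1 * (2 * f d + f (d + 2) + f (d - 2)).
Proof.
rewrite /Kop !big_bool /ee /=; congr (_ * _).
have -> : (1 - 1 : int) = 0 by [].
have -> : (-1 - -1 : int) = 0 by [].
have -> : (1 - -1 : int) = 2 by [].
have -> : (-1 - 1 : int) = -2 by [].
rewrite addr0; ring.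
Qed.

Definition U m d := Ev (fun s s' : steps m => \sum_(i < m) dl (d + Dw s s' i.+1)).
Definition Up m d := Ev (fun s s' : steps m => \sum_(i < m) dl (d + Dw s s' i)).
Definition A m (d : int) := Ev (fun s s' : steps m => `|((d + Dw s s' m)%:~R : R)|).
Definition Q m (d : int) := Ev (fun s s' : steps m => ((d + Dw s s' m)%:~R : R) ^+ 2).
Definition V (a : R) m d :=
  Ev (fun s s' : steps m => \prod_(i < m) (1 + a * dl (d + Dw s s' i.+1))).

Lemma U0 d : U 0 d = 0.
Proof. by rewrite /U; under eq_Ev => s s' do rewrite big_ord0; rewrite Ev_const. Qed.
Lemma Up0 d : Up 0 d = 0.
Proof. by rewrite /Up; under eq_Ev => s s' do rewrite big_ord0; rewrite Ev_const. Qed.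
Lemma A0 d : A 0 d = `|(d%:~R : R)|.
Proof. by rewrite /A; under eq_Ev => s s' do rewrite Dw0 addr0; rewrite Ev_const. Qed.
Lemma Q0 d : Q 0 d = (d%:~R : R) ^+ 2.
Proof. by rewrite /Q; under eq_Ev => s s' do rewrite Dw0 addr0; rewrite Ev_const. Qed.
Lemma V0 a d : V a 0 d = 1.
Proof. by rewrite /V; under eq_Ev => s s' do rewrite big_ord0; rewrite Ev_const. Qed.

Lemma US m d : U m.+1 d = Kop (fun x => dl x + U m x) d.
Proof.
rewrite /U Ev_split /Kop; congr (_ * _); apply: eq_bigr => b _; apply: eq_bigr => b' _.
under eq_Ev => s s' do rewrite big_ord_recl /= DwS Dw0 addr0.
rewrite EvD Ev_const; congr (_ + _); apply: eq_Ev => y y'.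
by apply: eq_bigr => i _; rewrite DwS addrA.
Qed.

Lemma UpS m d : Up m.+1 d = dl d + Kop (Up m) d.
Proof.
have H : forall b b', Ev (fun y y' : steps m =>
   \sum_(i < m.+1) dl (d + Dw (fcons b y) (fcons b' y') i))
   = dl d + Up m (d + ee b b').
  move=> b b'; rewrite /Up -[dl d](@Ev_const _ m) -EvD.
  apply: eq_Ev => y y'; rewrite big_ord_recl Dw0 addr0; congr (_ + _).
  by apply: eq_bigr => i _; rewrite ?bump00 ?lift0 DwS addrA.
rewrite /Up Ev_split !big_bool /= !H -/(Up m) /Kop !big_bool /=.
by field.
Qed.


Lemma AS m d : A m.+1 d = Kop (A m) d.
Proof.
have H : forall b b', Ev (fun y y' : steps m =>
   `|((d + Dw (fcons b y) (fcons b' y') m.+1)%:~R : R)|) = A m (d + ee b b').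
  by move=> b b'; rewrite /A; apply: eq_Ev => y y'; rewrite DwS addrA.
by rewrite /A Ev_split !big_bool /= !H -/(A m) /Kop !big_bool /=.
Qed.

Lemma QS m d : Q m.+1 d = Kop (Q m) d.
Proof.
have H : forall b b', Ev (fun y y' : steps m =>
   ((d + Dw (fcons b y) (fcons b' y') m.+1)%:~R : R) ^+ 2) = Q m (d + ee b b').
  by move=> b b'; rewrite /Q; apply: eq_Ev => y y'; rewrite DwS addrA.
by rewrite /Q Ev_split !big_bool /= !H -/(Q m) /Kop !big_bool /=.
Qed.

Lemma VS a m d : V a m.+1 d = Kop (fun x => (1 + a * dl x) * V a m x) d.
Proof.
have H : forall b b', Ev (fun y y' : steps m =>
   \prod_(i < m.+1) (1 + a * dl (d + Dw (fcons b y) (fcons b' y') i.+1)))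
   = (1 + a * dl (d + ee b b')) * V a m (d + ee b b').
  move=> b b'; rewrite /V -EvZ.
  apply: eq_Ev => y y'; rewrite big_ord_recl DwS Dw0 addr0; congr (_ * _).
  by apply: eq_bigr => i _; rewrite ?bump00 ?lift0 DwS addrA.
by rewrite /V Ev_split !big_bool /= !H -/(V a m) /Kop !big_bool /=.
Qed.

End Rec.

Section Ana.
Variable R : realType.

Lemma i2 : ((2:int)%:~R : R) = 2.
Proof. by []. Qed.

Lemma Q_eq m d : Q R m d = (d%:~R : R) ^+ 2 + 2 * m%:R.
Proof.
elim: m d => [|m IH] d; first by rewrite Q0 mulr0 addr0.
rewrite QS Kop_eq !IH !intrD ?intrN i2 -addn1 natrD; by field.
Qed.

Lemma dl01 (x : int) : 0 <= dl R x <= 1.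
Proof. by rewrite /dl; case: (x == 0); rewrite /= ?lexx ?ler01. Qed.

Lemma key (d : int) :
  4 * `|(d%:~R : R)| + 4 * dl R d <= 2 * `|d%:~R| + `|(d + 2)%:~R| + `|(d - 2)%:~R|.
Proof.
rewrite /dl; have [->|dn0] := eqVneq d 0.
  rewrite /= add0r sub0r intrN i2 mulr0z normrN normr0 ger0_norm //; lra.
rewrite /= mulr0 addr0 !intrD ?intrN i2.
have : `|(d%:~R : R) *+ 2| <= `|d%:~R + 2| + `|d%:~R - 2|.
  have -> : (d%:~R : R) *+ 2 = (d%:~R + 2) + (d%:~R - 2) by rewrite mulr2n; ring.
  exact: ler_normD.
rewrite normrMn; lra.
Qed.

Lemma A_ge m d : `|(d%:~R : R)| + Up R m d <= A R m d.
Proof.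
elim: m d => [|m IH] d; first by rewrite Up0 A0 addr0.
rewrite UpS AS !Kop_eq.
have := IH d; have := IH (d + 2); have := IH (d - 2); have := key d.
lra.
Qed.

Lemma U_le m d : U R m d <= Up R m d + 1.
Proof.
rewrite /U /Up -(@Ev_const R m 1) -EvD; apply: Ev_le => s s'.
set f := fun n : nat => dl R (d + Dw s s' n).
have E : f 0%N + \sum_(i < m) f i.+1 = \sum_(i < m) f i + f m.
  rewrite -(big_ord_recr m f) big_ord_recl /=.
  by congr (_ + _); apply: eq_bigr => i _; rewrite lift0.
have := dl01 (d + Dw s s' 0); have := dl01 (d + Dw s s' m).
rewrite -/(f 0%N) -/(f m). lra.
Qed.

End Ana.

Section Main.
Variable R : realType.

Lemma U_ge0 m d : 0 <= U R m d.
Proof.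
have H := @Ev_le R m (fun _ _ => 0) (fun s s' => \sum_(i < m) dl R (d + Dw s s' i.+1)).
rewrite Ev_const in H; apply: H => s s'.
by apply: sumr_ge0 => i _; case/andP: (dl01 R (d + Dw s s' i.+1)).
Qed.

Definition S (a B : R) m := \sum_(k < m) (a * B) ^+ k.

Lemma S_rec a B m : S a B m.+1 = 1 + a * B * S a B m.
Proof.
rewrite /S big_ord_recl expr0 mulr_sumr; congr (_ + _).
by apply: eq_bigr => i _; rewrite exprS.
Qed.

Lemma S_ge0 a B m : 0 <= a * B -> 0 <= S a B m.
Proof. by move=> h; apply: sumr_ge0 => i _; apply: exprn_ge0. Qed.

Lemma S_mono a B m : 0 <= a * B -> S a B m <= S a B m.+1.
Proof.
move=> h; rewrite /S big_ord_recr /= lerDl; exact: exprn_ge0.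
Qed.

Lemma V_bound a B M : 0 <= a -> 0 <= B ->
  (forall j, (j < M)%N -> U R j 0 <= B) ->
  forall m, (m <= M)%N -> forall d, V a m d - 1 <= U R m d * (a * S a B m).
Proof.
move=> ha hB hU; elim => [|m IH] hm d.
  by rewrite V0 U0 subrr mul0r.
have IH' := IH (ltnW hm).
have Ult : U R m 0 <= B := hU m hm.
have haB : 0 <= a * B by rewrite mulr_ge0.
have [t Et] : {t | t = a * S a B m} by exists (a * S a B m).
have [t' Et'] : {t' | t' = a * S a B m.+1} by exists (a * S a B m.+1).
rewrite -Et'; rewrite -Et in IH'.
have ht : 0 <= t by rewrite Et mulr_ge0 // S_ge0.
have tt' : t <= t' by rewrite Et Et' ler_wpM2l // S_mono.
have et' : t' = a + a * B * t by rewrite Et Et' S_rec; ring.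
have T : forall x, (1 + a * dl R x) * V a m x - 1 <= (dl R x + U R m x) * t'.
  move=> x; rewrite /dl; have [->|xn] := eqVneq x 0.
    have -> : (true%:R : R) = 1 by [].
    rewrite mulr1.
    have I0 := IH' 0.
    have h1 : U R m 0 * t <= U R m 0 * t' by rewrite ler_wpM2l // U_ge0.
    have h2 : a * (U R m 0 * t) <= a * (B * t).
      by rewrite ler_wpM2l // ler_wpM2r.
    have h3 : a * V a m 0 <= a * (1 + U R m 0 * t).
      by rewrite ler_wpM2l //; lra.
    rewrite et' in h1 *. nra.
  have -> : (false%:R : R) = 0 by [].
  rewrite mulr0 addr0 mul1r add0r.
  have := IH' x; have : U R m x * t <= U R m x * t' by rewrite ler_wpM2l // U_ge0.
  lra.
rewrite VS US !Kop_eq.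
have := T d; have := T (d + 2); have := T (d - 2).
lra.
Qed.

End Main.

Section Env.
Variable R : realType.

Definition hh (c : R) (n : nat) : R := ((1 + c) ^+ n + (1 - c) ^+ n) / 2.

Lemma hh0 c : hh c 0 = 1.
Proof. by rewrite /hh !expr0; field. Qed.
Lemma hh1 c : hh c 1 = 1.
Proof. by rewrite /hh !expr1; field. Qed.
Lemma hh2 c : hh c 2 = 1 + c ^+ 2.
Proof. by rewrite /hh; field. Qed.

Lemma env_avg N (c : R) (mm : 'I_N -> 'I_(N.*2).+1 -> nat) :
  avg (fun h : env N => \prod_(i < N) \prod_(x < (N.*2).+1)
        (1 + c * sgnb R (h (i, x))) ^+ mm i x)
  = \prod_(i < N) \prod_(x < (N.*2).+1) hh c (mm i x).
Proof.
pose G (k : 'I_N * 'I_(N.*2).+1) (b : bool) := (1 + c * sgnb R b) ^+ mm k.1 k.2.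
have E : forall h : env N, \prod_(i < N) \prod_(x < (N.*2).+1)
        (1 + c * sgnb R (h (i, x))) ^+ mm i x = \prod_k G k (h k).
  by move=> h; rewrite pair_big /=; apply: eq_bigr => -[i x] _.
rewrite /avg; under eq_bigr do rewrite E.
rewrite -bigA_distr_bigA /=.
have E2 : forall k, \sum_(b : bool) G k b = 2 * hh c (mm k.1 k.2).
  by move=> k; rewrite big_bool /G /hh /sgnb /= mulr1 mulrN1 [2 * _]mulrC divfK.
under eq_bigr do rewrite E2.
rewrite big_split /= prodr_const card_ffun card_bool natrX.
rewrite mulrA mulVf ?mul1r ?expf_neq0 //.
by rewrite pair_big /=.
Qed.

End Env.

Section Wire.
Variable R : realType.

Lemma avgD (T : finType) (f g : T -> R) :
  avg (fun t => f t + g t) = avg f + avg g.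
Proof. by rewrite /avg big_split mulrDr. Qed.

Lemma avgZ (T : finType) k (f : T -> R) : avg (fun t => k * f t) = k * avg f.
Proof. by rewrite /avg -mulr_sumr mulrCA. Qed.

Lemma avg_const (T : finType) (k : R) : (0 < #|T|)%N -> avg (fun _ : T => k) = k.
Proof.
move=> hT; rewrite /avg sumr_const -[k *+ _]mulr_natr mulrCA mulVf ?mulr1 //.
by rewrite pnatr_eq0 -lt0n.
Qed.

Definition pos N (s : steps N) (i : 'I_N) : 'I_(N.*2).+1 :=
  inord (absz (walk_pos s i.+1 + N%:Z)).

Lemma walk_bound N (s : steps N) n : `|walk_pos s n| <= N%:Z.
Proof.
rewrite /walk_pos; apply: le_trans (ler_norm_sum _ _ _) _.
have -> : \sum_(i < N | (i < n)%N) `|(if s i then 1 else -1 : int)| = 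
          \sum_(i < N | (i < n)%N) 1.
  by apply: eq_bigr => i _; case: (s i).
rewrite sumr_const.
have := max_card (fun i : 'I_N => (i < n)%N); rewrite card_ord => h.
by rewrite natz lez_nat.
Qed.

Lemma pos_eq N (s s' : steps N) i :
  (pos s i == pos s' i) = (walk_pos s i.+1 == walk_pos s' i.+1).
Proof.
have hb : forall w : int, `|w| <= N%:Z ->
    (0 <= w + N%:Z) && (absz (w + N%:Z)%R < (N.*2).+1)%N.
  move=> w; rewrite ler_norml => /andP [h1 h2].
  have h0 : 0 <= w + N%:Z by lra.
  rewrite h0 /= -ltz_nat abszE ger0_norm // -addn1 -muln2 PoszD PoszM.
  lra.
have := hb _ (walk_bound s i.+1); have := hb _ (walk_bound s' i.+1).
move=> /andP [a1 a2] /andP [b1 b2].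
rewrite /pos -val_eqE /= !inordK // -eqz_nat !abszE !ger0_norm //.
apply/eqP/eqP => [/addIr|->] //.
Qed.

Lemma prodx_pick M (f : 'I_M -> R) p : \prod_(x < M) f x ^+ (x == p) = f p.
Proof.
rewrite (bigD1 p) //= eqxx expr1 big1 ?mulr1 // => x /negPf ->.
by rewrite expr0.
Qed.

Lemma Zpart_eq N (c : R) (h : env N) : Zpart c h =
  avg (fun s : steps N => \prod_(i < N) \prod_(x < (N.*2).+1)
        (1 + c * sgnb R (h (i, x))) ^+ (x == pos s i)).
Proof.
rewrite /Zpart; congr avg; apply: funext => s; apply: eq_bigr => i _.
by rewrite prodx_pick.
Qed.

End Wire.

Section W2.
Variable R : realType.

Lemma avg_swap (T U : finType) (F : T -> U -> R) :
  avg (fun t => avg (fun u => F t u)) = avg (fun u => avg (fun t => F t u)).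
Proof. by rewrite /avg -!mulr_sumr exchange_big /= mulrCA. Qed.

Lemma avg_mul (T U : finType) (f : T -> R) (g : U -> R) :
  avg f * avg g = avg (fun t => avg (fun u => f t * g u)).
Proof.
rewrite /avg.
have -> : \sum_t (#|U|%:R^-1 * \sum_u f t * g u) =
   #|U|%:R^-1 * \sum_t \sum_u f t * g u by rewrite mulr_sumr.
have -> : \sum_t \sum_u f t * g u = (\sum_t f t) * (\sum_u g u).
  rewrite big_distrl /=; apply: eq_bigr => t _; by rewrite mulr_sumr.
ring.
Qed.

Lemma avg2_Ev m (F : steps m -> steps m -> R) :
  avg (fun s => avg (fun s' => F s s')) = Ev F.
Proof.
rewrite /avg /Ev -mulr_sumr mulrA -invfM card_steps -natrM -expnMn.
by rewrite natrX.
Qed.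

Lemma hh_bool (c : R) (b : bool) : hh c b = 1.
Proof. by case: b; rewrite ?hh0 ?hh1. Qed.

Lemma hh_pair N (c : R) (p q : 'I_N) :
  \prod_(x < N) hh c ((x == p) + (x == q))%N = 1 + c ^+ 2 * (p == q)%:R.
Proof.
rewrite (bigD1 p) //= eqxx big1 ?mulr1; last first.
  by move=> x /negPf ->; rewrite add0n hh_bool.
by case: eqP => _; rewrite ?hh2 ?hh1 ?mulr1 ?mulr0 ?addr0.
Qed.

Lemma Z1 N (c : R) : avg (fun h : env N => Zpart c h) = 1.
Proof.
under eq_fun do rewrite Zpart_eq.
rewrite avg_swap.
under eq_fun do rewrite env_avg.
under eq_fun do under eq_bigr do under eq_bigr do rewrite hh_bool.
under eq_fun do under eq_bigr do rewrite big1 //.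
rewrite avg_const ?big1 //; apply/card_gt0P; by exists [ffun _ => true].
Qed.

Lemma Zsq N (c : R) : avg (fun h : env N => Zpart c h ^+ 2) =
  Ev (fun s s' : steps N => \prod_(i < N) (1 + c ^+ 2 * (pos s i == pos s' i)%:R)).
Proof.
under eq_fun do rewrite expr2 Zpart_eq avg_mul.
rewrite avg_swap.
under eq_fun do rewrite avg_swap.
rewrite -avg2_Ev; congr avg; apply: funext => s; congr avg; apply: funext => s'.
under eq_fun do rewrite -big_split /=.
under eq_fun do under eq_bigr do rewrite -big_split /=.
under eq_fun do under eq_bigr do under eq_bigr do rewrite -exprD.
by rewrite env_avg; apply: eq_bigr => i _; rewrite hh_pair.
Qed.

End W2.

Lemma A_Q (R : realType) m d (l : R) : 0 <= l -> 2 * l * A R m d <= Q R m d + l ^+ 2.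
Proof.
move=> hl; rewrite /A /Q -EvZ -[l ^+ 2](@Ev_const R m) -EvD; apply: Ev_le => s s' /=.
set w := ((d + Dw s s' m)%:~R : R).
have hw : w ^+ 2 = `|w| ^+ 2 by rewrite real_normK // num_real.
rewrite hw; have := sqr_ge0 (`|w| - l); nra.
Qed.

Lemma U_bound (R : realType) N j : (1 <= N)%N -> (j <= N)%N ->
  U R j 0 <= 3 * Num.sqrt (N%:R : R).
Proof.
move=> hN hj.
set l := Num.sqrt (N%:R : R).
have hl0 : 0 <= l by rewrite sqrtr_ge0.
have hl2 : l ^+ 2 = N%:R by rewrite sqr_sqrtr // ler0n.
have hN1 : (1 : R) <= N%:R by rewrite ler1n.
have hjN : (j%:R : R) <= N%:R by rewrite ler_nat.
have h1 := U_le R j 0.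
have h2 := A_ge R j 0.
have h3 := A_Q j 0 hl0.
rewrite Q_eq in h3.
rewrite mulr0z normr0 add0r in h2.
rewrite mulr0z expr0n /= add0r in h3.
have hl1 : 1 <= l by nra.
have hA : A R j 0 * l <= (3 / 2 * l) * l by nra.
have hA' : A R j 0 <= 3 / 2 * l.
  by rewrite -(ler_pM2r (lt_le_trans ltr01 hl1)).
lra.
Qed.

Unset Implicit Arguments. Set Strict Implicit.

Theorem lemma12 (R : realType) :
  exists c1 : R,
  forall c : nat -> R,
    (forall N : nat, (0 < N)%N -> 0 < c N) ->
    (fun N : nat => c N ^+ 2 * Num.sqrt (N%:R : R)) @ \oo --> (0 : R) ->
    forall N : nat, (1 <= N)%N ->
      @avg R _ (fun h : env N => (@Zpart R N (c N) h - 1) ^+ 2)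
      <= \sum_(1 <= n < N.+1) (c1 * c N ^+ 2 * Num.sqrt (N%:R : R)) ^+ n.
Proof.
exists 3 => c _ _ N hN.
have [a Ea] : {a | a = c N ^+ 2} by exists (c N ^+ 2).
have [B EB] : {B | B = 3 * Num.sqrt (N%:R : R)} by exists (3 * Num.sqrt (N%:R : R)).
have ha : 0 <= a by rewrite Ea sqr_ge0.
have hB : 0 <= B by rewrite EB mulr_ge0 // sqrtr_ge0.
have E1 : avg (fun h : env N => (Zpart (c N) h - 1) ^+ 2) = V a N 0 - 1.
  have -> : (fun h : env N => (Zpart (c N) h - 1) ^+ 2) =
      (fun h => Zpart (c N) h ^+ 2 + ((-2) * Zpart (c N) h + 1)).
    by apply: funext => h; ring.
  rewrite avgD avgD avgZ Z1 avg_const; last first.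
    by apply/card_gt0P; exists [ffun _ => true].
  rewrite Zsq.
  have -> : Ev (fun s s' : steps N => \prod_(i < N) (1 + c N ^+ 2 * (pos s i == pos s' i)%:R))
      = V a N 0.
    rewrite /V; apply: eq_Ev => s s'; apply: eq_bigr => i _.
    by rewrite pos_eq /dl /Dw add0r subr_eq0 Ea.
  ring.
rewrite E1.
have hU : forall j, (j < N)%N -> U R j 0 <= B.
  by move=> j hj; rewrite EB; apply: U_bound => //; apply: ltnW.
have := V_bound ha hB hU (leqnn N) 0.
have hUN : U R N 0 <= B by rewrite EB; apply: U_bound.
have hS : 0 <= a * S a B N by rewrite mulr_ge0 // S_ge0 // mulr_ge0.
have h2 : U R N 0 * (a * S a B N) <= B * (a * S a B N) by rewrite ler_wpM2r.
have E2 : B * (a * S a B N) =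
    \sum_(1 <= n < N.+1) (3 * c N ^+ 2 * Num.sqrt (N%:R : R)) ^+ n.
  rewrite big_add1 /= big_mkord /S !mulr_sumr; apply: eq_bigr => i _.
  have -> : a * B = 3 * c N ^+ 2 * Num.sqrt (N%:R : R) by rewrite Ea EB; ring.
  rewrite [_ ^+ i.+1]exprS EB Ea; ring.
lra.
Qed.
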